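(* Let $0<q<1$, $n\ge 1$, and let $a_j,b_j$ ($1\le j\le n$) be non-negative integers. Then \[ \zeta\big[a_1+2,\{1\}^{b_1},\dots,a_n+2,\{1\}^{b_n}\big] = \zeta\big[b_n+2,\{1\}^{a_n},\,b_{n-1}+2,\{1\}^{a_{n-1}},\dots,b_1+2,\{1\}^{a_1}\big]. \]
   Context: Fix $0<q<1$. For real $x$, $[x]_q := (1-q^x)/(1-q)$. For positive integers $s_1,\dots,s_N$ with $s_1>1$, $\zeta[s_1,\dots,s_N] := \sum_{k_1>\cdots>k_N>0}\prod_{j=1}^N q^{(s_j-1)k_j}/[k_j]_q^{s_j}$ (sum over positive integers). $\{1\}^b$ denotes $b$ consecutive copies of $1$ in an argument list (empty if $b=0$). *)

(* Defs.v *)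
From Stdlib Require Import Reals List.
From Coquelicot Require Import Coquelicot.
Open Scope R_scope.

Definition qint (q x : R) : R := (1 - Rpower q x) / (1 - q).

Definition qterm (q : R) (s k : nat) : R :=
  q ^ ((s - 1) * k) / (qint q (INR k)) ^ s.

(* Truncated nested sum: ztr q [s1;...;sN] M =
   sum over M > k1 > k2 > ... > kN > 0 of prod_j qterm q s_j k_j.
   (ztr q [] M = 1, the empty product.) *)
Fixpoint ztr (q : R) (l : list nat) (M : nat) : R :=
  match l with
  | nil => 1
  | s :: l' =>
      fold_right (fun k acc => qterm q s k * ztr q l' k + acc) 0
        (seq 1 (M - 1))
  end.

Definition qzeta (q : R) (l : list nat) : Rbar :=
  Lim_seq (fun M => ztr q l M).

Definition lhs_args (n : nat) (a b : nat -> nat) : list nat :=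
  flat_map (fun j => (a j + 2)%nat :: repeat 1%nat (b j)) (seq 1 n).

Definition rhs_args (n : nat) (a b : nat -> nat) : list nat :=
  flat_map (fun j => (b j + 2)%nat :: repeat 1%nat (a j)) (rev (seq 1 n)).

(* Main.v *)
Require Import Defs.
From Stdlib Require Import Reals List Lia Lra.
From Coquelicot Require Import Coquelicot.
Open Scope R_scope.

Fixpoint sm (f : nat -> R) (n : nat) : R :=
  match n with O => 0 | S n => sm f n + f n end.

Lemma sm_S f n : sm f (S n) = sm f n + f n.
Proof. reflexivity. Qed.

Lemma sm_ext f g n : (forall i, (i < n)%nat -> f i = g i) -> sm f n = sm g n.
Proof. induction n; simpl; intros H; auto. rewrite IHn; [rewrite H|]; auto; intros; apply H; lia. Qed.

Lemma sm_plus f g n : sm (fun i => f i + g i) n = sm f n + sm g n.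
Proof. induction n; simpl; [lra|rewrite IHn; lra]. Qed.

Lemma sm_minus f g n : sm (fun i => f i - g i) n = sm f n - sm g n.
Proof. induction n; simpl; [lra|rewrite IHn; lra]. Qed.

Lemma sm_opp f n : sm (fun i => - f i) n = - sm f n.
Proof. induction n; simpl; [lra|rewrite IHn; lra]. Qed.

Lemma sm_scal c f n : sm (fun i => c * f i) n = c * sm f n.
Proof. induction n; simpl; [lra|rewrite IHn; lra]. Qed.

Lemma sm_scalr c f n : sm (fun i => f i * c) n = sm f n * c.
Proof. induction n; simpl; [lra|rewrite IHn; lra]. Qed.

Lemma sm_zero f n : (forall i, (i < n)%nat -> f i = 0) -> sm f n = 0.
Proof. induction n; simpl; intros H; auto.
  rewrite IHn, H; [lra|lia|]. intros; apply H; lia. Qed.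

Lemma sm_swap (F : nat -> nat -> R) n m :
  sm (fun i => sm (fun j => F i j) m) n = sm (fun j => sm (fun i => F i j) n) m.
Proof.
  induction n; simpl.
  - symmetry; apply sm_zero; auto.
  - rewrite IHn, sm_plus; auto.
Qed.

Lemma sm_le f g n : (forall i, (i < n)%nat -> f i <= g i) -> sm f n <= sm g n.
Proof. induction n; simpl; intros H; [lra|]. apply Rplus_le_compat; auto. Qed.

Lemma sm_nonneg f n : (forall i, (i < n)%nat -> 0 <= f i) -> 0 <= sm f n.
Proof. intros H. apply Rle_trans with (sm (fun _ => 0) n).
  rewrite sm_zero; auto; lra. apply sm_le; auto. Qed.

Lemma sm_const c n : sm (fun _ => c) n = INR n * c.
Proof. induction n; [simpl; lra|]. rewrite S_INR. simpl. rewrite IHn. lra. Qed.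

Lemma sm_shift g n : sm g (S n) = g O + sm (fun i => g (S i)) n.
Proof. induction n; simpl in *; [lra|]. rewrite IHn. lra. Qed.

Lemma sm_ind_lt f n M : (n <= M)%nat ->
  sm f n = sm (fun i => if Nat.ltb i n then f i else 0) M.
Proof.
  intros H. induction M.
  - assert (n = O) by lia; subst; auto.
  - destruct (Nat.eq_dec n (S M)).
    + subst. simpl.
      assert (E: Nat.ltb M (S M) = true) by (apply Nat.ltb_lt; lia). rewrite E.
      f_equal. apply sm_ext. intros i Hi.
      assert (E2: Nat.ltb i (S M) = true) by (apply Nat.ltb_lt; lia). rewrite E2; auto.
    + simpl. rewrite IHM by lia.
      assert (E: Nat.ltb M n = false) by (apply Nat.ltb_ge; lia). rewrite E. lra.
Qed.

Definition qi (q : R) (k : nat) : R := qint q (INR k).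

Lemma qi_eq q k : 0 < q < 1 -> qi q k = (1 - q ^ k) / (1 - q).
Proof. intros Hq. unfold qi, qint. rewrite Rpower_pow; lra. Qed.

Lemma qi_0 q : 0 < q < 1 -> qi q 0 = 0.
Proof. intros Hq. rewrite qi_eq; auto. simpl. field. lra. Qed.

Lemma qi_add q m n : 0 < q < 1 -> qi q (m + n) = qi q m + q ^ m * qi q n.
Proof. intros Hq. rewrite !qi_eq, pow_add; auto. field. lra. Qed.

Lemma pow_le1 x k : 0 <= x <= 1 -> 0 <= x ^ k <= 1.
Proof. intros H. induction k; simpl; [lra|]. split; [apply Rmult_le_pos; lra|].
  rewrite <- (Rmult_1_l 1). apply Rmult_le_compat; lra. Qed.

Lemma pow_anti x a b : 0 <= x <= 1 -> (b <= a)%nat -> x ^ a <= x ^ b.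
Proof. intros H Hab. replace a with (b + (a - b))%nat by lia. rewrite pow_add.
  pose proof (pow_le1 x (a - b) H). pose proof (pow_le1 x b H).
  rewrite <- (Rmult_1_r (x ^ b)) at 2. apply Rmult_le_compat_l; lra. Qed.

Lemma qi_ge1 q k : 0 < q < 1 -> (1 <= k)%nat -> 1 <= qi q k.
Proof.
  intros Hq Hk. rewrite qi_eq; auto.
  apply Rmult_le_reg_r with (1 - q); [lra|].
  unfold Rdiv. rewrite Rmult_assoc, Rinv_l, Rmult_1_l, Rmult_1_r by lra.
  destruct k; [lia|]. simpl.
  pose proof (pow_le1 q k ltac:(lra)). nra.
Qed.

Lemma qi_nonneg q k : 0 < q < 1 -> 0 <= qi q k.
Proof. intros Hq. destruct k. rewrite qi_0; auto; lra. pose proof (qi_ge1 q (S k) Hq ltac:(lia)). lra. Qed.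

Lemma inv_qi_bnd q k : 0 < q < 1 -> 0 <= / qi q k <= 1.
Proof. intros Hq. destruct k. rewrite qi_0, Rinv_0; auto; lra.
  pose proof (qi_ge1 q (S k) Hq ltac:(lia)). split.
  apply Rlt_le, Rinv_0_lt_compat; lra.
  rewrite <- Rinv_1. apply Rinv_le_contravar; lra. Qed.

Lemma qx_bnd q k : 0 < q < 1 -> 0 <= q ^ k / qi q k <= 1.
Proof. intros Hq. pose proof (inv_qi_bnd q k Hq). pose proof (pow_le1 q k ltac:(lra)).
  unfold Rdiv. split. apply Rmult_le_pos; lra. rewrite <- (Rmult_1_l 1).
  apply Rmult_le_compat; lra. Qed.
Fixpoint qF (q : R) (k : nat) : R :=
  match k with O => 1 | S k => qF q k * qi q (S k) end.

Lemma qF_pos q k : 0 < q < 1 -> 0 < qF q k.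
Proof. intros Hq. induction k; simpl; [lra|]. pose proof (qi_ge1 q (S k) Hq ltac:(lia)). nra. Qed.

Lemma qF_sub q m n : 0 < q < 1 -> qF q m * qF q n <= qF q (m + n).
Proof.
  intros Hq. induction n.
  - simpl. rewrite Nat.add_0_r. lra.
  - replace (m + S n)%nat with (S (m + n)) by lia. simpl.
    pose proof (qF_pos q m Hq). pose proof (qF_pos q n Hq).
    assert (qi q (S n) <= qi q (S (m + n))).
    { replace (S (m + n)) with (S n + m)%nat by lia. rewrite qi_add; auto.
      pose proof (qi_nonneg q m Hq). pose proof (pow_le1 q (S n) ltac:(lra)). nra. }
    pose proof (qi_ge1 q (S n) Hq ltac:(lia)).
    apply Rle_trans with (qF q m * qF q n * qi q (S (m + n))).
    + rewrite Rmult_assoc. apply Rmult_le_compat_l; [lra|]. nra.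
    + apply Rmult_le_compat_r; lra.
Qed.

Definition Phi (q : R) (m n : nat) : R := q ^ (m * n) * qF q m * qF q n / qF q (m + n).

Lemma Phi_sym q m n : Phi q m n = Phi q n m.
Proof. unfold Phi. rewrite Nat.mul_comm, Nat.add_comm. lra. Qed.

Lemma Phi_m0 q m : 0 < q < 1 -> Phi q m 0 = 1.
Proof. intros Hq. unfold Phi. rewrite Nat.mul_0_r, Nat.add_0_r. simpl.
  pose proof (qF_pos q m Hq). field. lra. Qed.

Lemma Phi_0n q n : 0 < q < 1 -> Phi q 0 n = 1.
Proof. intros Hq. rewrite Phi_sym. apply Phi_m0; auto. Qed.

Lemma Phi_bnd q m n : 0 < q < 1 -> 0 <= Phi q m n <= q ^ (m * n).
Proof.
  intros Hq. unfold Phi. pose proof (qF_pos q m Hq). pose proof (qF_pos q n Hq).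
  pose proof (qF_pos q (m+n) Hq). pose proof (qF_sub q m n Hq).
  pose proof (pow_le1 q (m * n) ltac:(lra)).
  split.
  - apply Rmult_le_pos; [|apply Rlt_le, Rinv_0_lt_compat; lra].
    apply Rmult_le_pos; [apply Rmult_le_pos|]; lra.
  - unfold Rdiv. rewrite Rmult_assoc, Rmult_assoc.
    rewrite <- (Rmult_1_r (q ^ (m * n))) at 2. apply Rmult_le_compat_l; [lra|].
    apply Rmult_le_reg_r with (qF q (m + n)); [lra|].
    field_simplify; [|lra]. nra.
Qed.

Lemma Phi_step q m n : 0 < q < 1 -> (1 <= m)%nat ->
  q ^ m / qi q m * (Phi q m n - Phi q m (S n)) = Phi q m (S n) / qi q (S n).
Proof.
  intros Hq Hm.
  pose proof (qi_ge1 q m Hq Hm). pose proof (qi_ge1 q (S n) Hq ltac:(lia)).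
  pose proof (qF_pos q m Hq). pose proof (qF_pos q n Hq).
  pose proof (qF_pos q (m+n) Hq).
  assert (Hqm : 0 < q ^ m) by (apply pow_lt; lra).
  assert (Hadd : qi q (S (m + n)) = qi q m + q ^ m * qi q (S n)).
  { replace (S (m + n)) with (m + S n)%nat by lia. apply qi_add; auto. }
  unfold Phi. replace (m + S n)%nat with (S (m + n)) by lia. simpl qF.
  replace (m * S n)%nat with (m * n + m)%nat by lia. rewrite pow_add.
  rewrite Hadd. field. repeat split; try lra.
  pose proof (qi_nonneg q (S n) Hq). nra.
Qed.

Lemma tele q a b k : 0 < q < 1 -> (1 <= a)%nat ->
  sm (fun b' => if Nat.ltb b b' then Phi q a b' / qi q b' else 0) (S b + k)
  = q ^ a / qi q a * (Phi q a b - Phi q a (b + k)).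
Proof.
  intros Hq Ha. induction k.
  - rewrite !Nat.add_0_r, Rminus_diag, Rmult_0_r. apply sm_zero.
    intros i Hi. assert (E: Nat.ltb b i = false) by (apply Nat.ltb_ge; lia). rewrite E; auto.
  - replace (S b + S k)%nat with (S (S b + k)) by lia. rewrite sm_S, IHk.
    assert (E: Nat.ltb b (S b + k) = true) by (apply Nat.ltb_lt; lia). rewrite E.
    replace (S b + k)%nat with (S (b + k)) by lia.
    rewrite <- (Phi_step q a (b + k) Hq Ha). replace (b + S k)%nat with (S (b + k)) by lia. ring.
Qed.

Lemma tele' q a b M : 0 < q < 1 -> (1 <= a)%nat -> (b < M)%nat ->
  sm (fun b' => if Nat.ltb b b' then Phi q a b' / qi q b' else 0) M
  = q ^ a / qi q a * (Phi q a b - Phi q a (M - 1)).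
Proof. intros Hq Ha Hb. replace M with (S b + (M - 1 - b))%nat at 1 by lia.
  rewrite tele; auto. do 3 f_equal. lia. Qed.
Fixpoint W (q : R) (w : list bool) (n : nat) : R :=
  match w with
  | nil => match n with O => 1 | S _ => 0 end
  | true :: w' => q ^ n / qi q n * W q w' n
  | false :: w' => / qi q n * sm (W q w') n
  end.

Definition Z (q : R) (M : nat) (u v : list bool) : R :=
  sm (fun m => W q u m * sm (fun n => W q v n * Phi q m n) M) M.

Lemma W_nonneg q w n : 0 < q < 1 -> 0 <= W q w n.
Proof.
  intros Hq. revert n; induction w as [|[|] w IH]; intros n; simpl.
  - destruct n; lra.
  - pose proof (qx_bnd q n Hq). pose proof (IH n). apply Rmult_le_pos; lra.
  - pose proof (inv_qi_bnd q n Hq). apply Rmult_le_pos; [lra|]. apply sm_nonneg; auto.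
Qed.

Lemma W_0 q w : 0 < q < 1 -> w <> nil -> W q w 0 = 0.
Proof.
  intros Hq Hw. destruct w as [|[|] w]; [congruence| |]; simpl.
  - rewrite qi_0; auto. unfold Rdiv. rewrite Rinv_0. ring.
  - ring.
Qed.

Lemma inner_x q v m M : 0 < q < 1 -> (1 <= m)%nat ->
  sm (fun n' => W q (false :: v) n' * Phi q m n') M
  = sm (fun n => W q v n * (q ^ m / qi q m * (Phi q m n - Phi q m (M - 1)))) M.
Proof.
  intros Hq Hm.
  transitivity (sm (fun n' => sm (fun n => (if Nat.ltb n n' then Phi q m n' / qi q n' else 0) * W q v n) M) M).
  - apply sm_ext; intros n' Hn'. simpl W. rewrite (sm_ind_lt (W q v) n' M) by lia.
    rewrite (sm_ext (fun n => (if Nat.ltb n n' then Phi q m n' / qi q n' else 0) * W q v n)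
               (fun n => (/ qi q n' * Phi q m n') * (if Nat.ltb n n' then W q v n else 0))).
    + rewrite sm_scal. ring.
    + intros i _. destruct (Nat.ltb i n'); unfold Rdiv; ring.
  - rewrite sm_swap. apply sm_ext; intros n Hn.
    rewrite (sm_ext _ (fun n' => W q v n * (if Nat.ltb n n' then Phi q m n' / qi q n' else 0)))
      by (intros; ring).
    rewrite sm_scal, tele'; auto.
Qed.

Lemma x_move q M u v : 0 < q < 1 -> u <> nil ->
  Z q M (true :: u) v - Z q M u (false :: v)
  = sm (fun m => W q u m * sm (fun n => W q v n * (q ^ m / qi q m * Phi q m (M - 1))) M) M.
Proof.
  intros Hq Hu. unfold Z. rewrite <- sm_minus. apply sm_ext; intros m Hm.
  simpl W at 1. destruct m.
  - rewrite W_0; auto. ring.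
  - rewrite inner_x by (auto; lia).
    set (c := q ^ S m / qi q (S m)).
    rewrite (sm_ext (fun n => W q v n * (c * (Phi q (S m) n - Phi q (S m) (M - 1))))
               (fun n => c * (W q v n * Phi q (S m) n) - W q v n * (c * Phi q (S m) (M - 1))))
      by (intros; ring).
    rewrite sm_minus, sm_scal. ring.
Qed.

Lemma y_move q M u v : 0 < q < 1 -> v <> nil ->
  Z q M (false :: u) v - Z q M u (true :: v)
  = - sm (fun m => W q u m * sm (fun n => W q v n * (q ^ n / qi q n * Phi q n (M - 1))) M) M.
Proof.
  intros Hq Hv. unfold Z. simpl W at 1.
  transitivity (sm (fun m => W q u m * sm (fun m' => if Nat.ltb m m' then / qi q m' * sm (fun n => W q v n * Phi q m' n) M else 0) M) M
     - sm (fun m => W q u m * sm (fun n => W q (true :: v) n * Phi q m n) M) M).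
  - f_equal.
    transitivity (sm (fun m' => sm (fun m => (if Nat.ltb m m' then W q u m * (/ qi q m' * sm (fun n => W q v n * Phi q m' n) M) else 0)) M) M).
    + apply sm_ext; intros m' Hm'. rewrite (sm_ind_lt (W q u) m' M) by lia.
      rewrite (sm_ext (fun m => if Nat.ltb m m' then W q u m * (/ qi q m' * sm (fun n => W q v n * Phi q m' n) M) else 0)
        (fun m => (/ qi q m' * sm (fun n => W q v n * Phi q m' n) M) * (if Nat.ltb m m' then W q u m else 0))).
      * rewrite sm_scal. ring.
      * intros i _. destruct (Nat.ltb i m'); ring.
    + rewrite sm_swap. apply sm_ext; intros m Hm. rewrite <- sm_scal. apply sm_ext; intros i _.
      destruct (Nat.ltb m i); ring.
  - rewrite <- sm_minus, <- sm_opp. apply sm_ext; intros m Hm.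
    assert (Hin : sm (fun m' => if Nat.ltb m m' then / qi q m' * sm (fun n => W q v n * Phi q m' n) M else 0) M
       = sm (fun n => W q v n * (q ^ n / qi q n * (Phi q n m - Phi q n (M - 1)))) M).
    { transitivity (sm (fun m' => sm (fun n => (if Nat.ltb m m' then Phi q n m' / qi q m' else 0) * W q v n) M) M).
      - apply sm_ext; intros m' _. destruct (Nat.ltb m m').
        + rewrite <- sm_scal. apply sm_ext; intros n _. rewrite (Phi_sym q m' n). unfold Rdiv. ring.
        + symmetry. apply sm_zero. intros; ring.
      - rewrite sm_swap. apply sm_ext; intros n Hn.
        rewrite (sm_ext _ (fun m' => W q v n * (if Nat.ltb m m' then Phi q n m' / qi q m' else 0)))
          by (intros; ring).
        rewrite sm_scal. destruct n.
        + rewrite W_0; auto. ring.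
        + rewrite tele'; auto; lia. }
    rewrite Hin. simpl W.
    set (K := (M - 1)%nat).
    rewrite (sm_ext (fun n => W q v n * (q ^ n / qi q n * (Phi q n m - Phi q n K)))
               (fun n => q ^ n / qi q n * W q v n * Phi q m n - W q v n * (q ^ n / qi q n * Phi q n K)))
      by (intros; rewrite (Phi_sym q m); ring).
    rewrite sm_minus. ring.
Qed.
Lemma W_bnd q w n : 0 < q < 1 -> W q w n <= (INR n + 1) ^ length w.
Proof.
  intros Hq. pose proof (pos_INR n) as Hn.
  revert n Hn; induction w as [|[|] w IH]; intros n Hn; simpl.
  - destruct n; lra.
  - pose proof (qx_bnd q n Hq). pose proof (IH n Hn). pose proof (W_nonneg q w n Hq).
    apply Rle_trans with (W q w n). { rewrite <- (Rmult_1_l (W q w n)) at 2.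
      apply Rmult_le_compat_r; lra. }
    apply Rle_trans with (1 * (INR n + 1) ^ length w); [lra|].
    apply Rmult_le_compat_r; [apply pow_le; lra|lra].
  - pose proof (inv_qi_bnd q n Hq).
    assert (H1 : sm (W q w) n <= INR n * (INR n + 1) ^ length w).
    { rewrite <- sm_const. apply sm_le. intros i Hi.
      apply Rle_trans with ((INR i + 1) ^ length w). apply IH, pos_INR.
      apply pow_incr. split. pose proof (pos_INR i); lra.
      apply lt_INR in Hi. lra. }
    assert (H2 : 0 <= sm (W q w) n) by (apply sm_nonneg; intros; apply W_nonneg; auto).
    apply Rle_trans with (1 * sm (W q w) n). apply Rmult_le_compat_r; lra.
    apply Rle_trans with (INR n * (INR n + 1) ^ length w); [lra|].
    apply Rmult_le_compat_r; [apply pow_le|]; lra.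
Qed.

Lemma smW_bnd q w M : 0 < q < 1 -> sm (W q w) M <= (INR M + 1) ^ (S (length w)).
Proof.
  intros Hq. pose proof (pos_INR M).
  apply Rle_trans with (INR M * (INR M + 1) ^ length w).
  - rewrite <- sm_const. apply sm_le. intros i Hi.
    apply Rle_trans with ((INR i + 1) ^ length w). apply W_bnd; auto.
    apply pow_incr. split. pose proof (pos_INR i); lra. apply lt_INR in Hi. lra.
  - simpl. apply Rmult_le_compat_r; [apply pow_le|]; lra.
Qed.

Lemma lim_pow u l D : is_lim_seq u (Finite l) -> is_lim_seq (fun n => u n ^ D) (Finite (l ^ D)).
Proof.
  intros H. induction D; simpl.
  - apply is_lim_seq_const.
  - apply (is_lim_seq_mult' u (fun n => u n ^ D) l (l ^ D)); auto.
Qed.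

Lemma poly_geom q D : 0 < q < 1 -> is_lim_seq (fun K => q ^ K * (INR K + 2) ^ D) 0.
Proof.
  intros Hq. set (a := fun K => q ^ K * (INR K + 2) ^ D).
  assert (Hpos : forall K, 0 < a K).
  { intros K. unfold a. apply Rmult_lt_0_compat; apply pow_lt; [lra|]. pose proof (pos_INR K); lra. }
  assert (Hr : is_lim_seq (fun K => Rabs (a (S K) / a K)) q).
  { apply is_lim_seq_ext with (fun K => q * (1 + / (INR K + 2)) ^ D).
    - intros K. rewrite Rabs_pos_eq.
      2:{ pose proof (Hpos (S K)); pose proof (Hpos K). apply Rlt_le, Rdiv_lt_0_compat; lra. }
      unfold a. rewrite S_INR. simpl pow.
      assert (0 < INR K + 2) by (pose proof (pos_INR K); lra).
      replace (1 + / (INR K + 2)) with ((INR K + 1 + 2) / (INR K + 2)) by (field; lra).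
      unfold Rdiv. rewrite Rpow_mult_distr, pow_inv. field.
      split; apply pow_nonzero; lra.
    - assert (Hm : is_lim_seq (fun K => q * (1 + / (INR K + 2)) ^ D) (q * 1 ^ D)).
      2:{ rewrite pow1, Rmult_1_r in Hm. exact Hm. }
      apply (is_lim_seq_mult' (fun _ => q)). apply is_lim_seq_const.
      apply lim_pow.
      assert (Hp : is_lim_seq (fun K => 1 + / (INR K + 2)) (1 + 0)).
      2:{ rewrite Rplus_0_r in Hp. exact Hp. }
      apply (is_lim_seq_plus' (fun _ => 1)). apply is_lim_seq_const.
      replace (Finite 0) with (Rbar_inv p_infty) by reflexivity.
      apply is_lim_seq_inv; [|discriminate].
      apply (is_lim_seq_plus _ _ p_infty 2); [apply is_lim_seq_INR|apply is_lim_seq_const|].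
      reflexivity. }
  assert (Hs := ex_series_DAlembert a q ltac:(lra) (fun K => Rgt_not_eq _ _ (Hpos K)) Hr).
  apply ex_series_lim_0 in Hs. apply is_lim_seq_abs_0. exact Hs.
Qed.

Lemma err_lim q u v (E : nat -> R) : 0 < q < 1 ->
  (forall M, Rabs (E M) <= sm (fun m => W q u m * sm (fun n => W q v n * q ^ (M - 1)) M) M) ->
  is_lim_seq E 0.
Proof.
  intros Hq HE. apply is_lim_seq_abs_0. apply is_lim_seq_incr_1.
  set (D := (S (length u) + S (length v))%nat).
  apply is_lim_seq_le_le with (fun _ => 0) (fun K => / q * (q ^ K * (INR K + 2) ^ D)).
  - intros K. split; [apply Rabs_pos|]. eapply Rle_trans; [apply HE|].
    rewrite (sm_ext _ (fun m => W q u m * (sm (W q v) (S K) * q ^ K))).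
    2:{ intros m _. rewrite sm_scalr. replace (S K - 1)%nat with K by lia. ring. }
    rewrite sm_scalr.
    pose proof (smW_bnd q u (S K) Hq). pose proof (smW_bnd q v (S K) Hq).
    assert (0 <= sm (W q u) (S K)) by (apply sm_nonneg; intros; apply W_nonneg; auto).
    assert (0 <= sm (W q v) (S K)) by (apply sm_nonneg; intros; apply W_nonneg; auto).
    assert (0 < q ^ K) by (apply pow_lt; lra).
    rewrite S_INR in *. replace (INR K + 1 + 1) with (INR K + 2) in * by ring.
    unfold D. rewrite pow_add.
    assert (Hq1 : 1 <= / q). { rewrite <- Rinv_1. apply Rinv_le_contravar; lra. }
    assert (0 <= (INR K + 2) ^ S (length u)) by (apply pow_le; pose proof (pos_INR K); lra).
    assert (0 <= (INR K + 2) ^ S (length v)) by (apply pow_le; pose proof (pos_INR K); lra).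
    apply Rle_trans with (1 * (q ^ K * ((INR K + 2) ^ S (length u) * (INR K + 2) ^ S (length v)))).
    + rewrite Rmult_1_l.
      replace (sm (W q u) (S K) * (sm (W q v) (S K) * q ^ K)) with (q ^ K * (sm (W q u) (S K) * sm (W q v) (S K))) by ring.
      apply Rmult_le_compat_l; [lra|]. apply Rmult_le_compat; lra.
    + apply Rmult_le_compat_r; [|lra]. apply Rmult_le_pos; [lra|]. apply Rmult_le_pos; lra.
  - apply is_lim_seq_const.
  - replace (Finite 0) with (Finite (/ q * 0)) by (f_equal; ring).
    apply (is_lim_seq_mult' (fun _ => / q)). apply is_lim_seq_const. apply poly_geom; auto.
Qed.
Lemma coef_bnd q m K : 0 < q < 1 -> 0 <= q ^ m / qi q m * Phi q m K <= q ^ K.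
Proof.
  intros Hq. destruct m.
  - rewrite qi_0; auto. unfold Rdiv. rewrite Rinv_0, Rmult_0_r, Rmult_0_l.
    pose proof (pow_le1 q K ltac:(lra)). lra.
  - pose proof (qx_bnd q (S m) Hq). pose proof (Phi_bnd q (S m) K Hq).
    assert (Hq' : 0 <= q <= 1) by lra.
    assert (HK : (K <= S m * K)%nat) by nia.
    pose proof (pow_anti q (S m * K)%nat K Hq' HK).
    split. apply Rmult_le_pos; lra.
    apply Rle_trans with (1 * q ^ (S m * K)); [apply Rmult_le_compat; lra | lra].
Qed.

Lemma dbl_bnd q u v M (c : nat -> nat -> R) K : 0 < q < 1 ->
  (forall m n, 0 <= c m n <= K) ->
  Rabs (sm (fun m => W q u m * sm (fun n => W q v n * c m n) M) M)
  <= sm (fun m => W q u m * sm (fun n => W q v n * K) M) M.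
Proof.
  intros Hq Hc. rewrite Rabs_pos_eq.
  - apply sm_le; intros m _. apply Rmult_le_compat_l; [apply W_nonneg; auto|].
    apply sm_le; intros n _. apply Rmult_le_compat_l; [apply W_nonneg; auto|]. apply Hc.
  - apply sm_nonneg; intros m _. apply Rmult_le_pos; [apply W_nonneg; auto|].
    apply sm_nonneg; intros n _. apply Rmult_le_pos; [apply W_nonneg; auto|]. apply Hc.
Qed.

Lemma transport q u : 0 < q < 1 -> forall v,
  (u = nil \/ last u true = false) -> (u = nil \/ hd false u = true \/ v <> nil) ->
  is_lim_seq (fun M => Z q M u v - Z q M nil (rev (map negb u) ++ v)) 0.
Proof.
  intros Hq. induction u as [|c u IH]; intros v H1 H2.
  - apply is_lim_seq_ext with (fun _ => 0). intros; simpl; ring. apply is_lim_seq_const.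
  - assert (Hu1 : u = nil \/ last u true = false).
    { destruct H1 as [H1|H1]; [discriminate|]. destruct u; auto. }
    replace (Finite 0) with (Finite (0 + 0)) by (f_equal; ring).
    apply is_lim_seq_ext with (fun M => (Z q M (c :: u) v - Z q M u (negb c :: v))
       + (Z q M u (negb c :: v) - Z q M nil (rev (map negb u) ++ negb c :: v))).
    { intros M. simpl. rewrite <- app_assoc. simpl. ring. }
    apply is_lim_seq_plus'.
    + destruct c; simpl negb.
      * assert (Hu : u <> nil).
        { intros ->. destruct H1 as [H1|H1]; [discriminate|]. simpl in H1. discriminate. }
        apply (err_lim q u v). auto. intros M. rewrite x_move; auto.
        apply dbl_bnd; auto. intros; apply coef_bnd; auto.
      * assert (Hv : v <> nil).
        { destruct H2 as [H2|[H2|H2]]; [discriminate|simpl in H2; discriminate|auto]. }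
        apply (err_lim q u v). auto. intros M. rewrite y_move, Rabs_Ropp; auto.
        apply dbl_bnd; auto. intros; apply coef_bnd; auto.
    + apply IH; auto. right; right; discriminate.
Qed.

Lemma Z_left q M w : 0 < q < 1 -> Z q M w nil = sm (W q w) M.
Proof.
  intros Hq. unfold Z. apply sm_ext; intros m Hm. destruct M; [lia|].
  rewrite sm_shift. rewrite sm_zero. simpl. rewrite Phi_m0; auto. ring.
  intros; simpl; ring.
Qed.

Lemma Z_right q M v : 0 < q < 1 -> Z q M nil v = sm (W q v) M.
Proof.
  intros Hq. unfold Z. destruct M; auto.
  rewrite sm_shift. rewrite (sm_zero (fun i => W q nil (S i) * _)) by (intros; simpl; ring).
  simpl W. rewrite Rplus_0_r, Rmult_1_l. apply sm_ext; intros n _. rewrite Phi_0n; auto. ring.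
Qed.

Definition idx2w (l : list nat) : list bool :=
  flat_map (fun s => repeat true (s - 1) ++ false :: nil) l.

Lemma W_rep q k w n : W q (repeat true k ++ w) n = (q ^ n / qi q n) ^ k * W q w n.
Proof. induction k; simpl; [ring|]. rewrite IHk. ring. Qed.

Lemma fold_seq (f : nat -> R) a n :
  fold_right (fun k acc => f k + acc) 0 (seq a n) = sm (fun i => f (a + i)%nat) n.
Proof.
  revert a; induction n; intros a; [reflexivity|].
  simpl seq. simpl fold_right. rewrite IHn, sm_shift, Nat.add_0_r. f_equal.
  apply sm_ext; intros. f_equal. lia.
Qed.

Lemma ztr_W q l : 0 < q < 1 -> List.Forall (fun s => (1 <= s)%nat) l ->
  (forall k, (1 <= k)%nat -> sm (W q (idx2w l)) k = ztr q l k)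
  /\ (l <> nil -> forall M, sm (W q (idx2w l)) M = ztr q l M).
Proof.
  intros Hq. induction l as [|s l IH]; intros HF.
  - split; [|congruence]. intros k Hk. destruct k; [lia|].
    rewrite sm_shift, sm_zero; [simpl; ring|]. intros; reflexivity.
  - inversion HF as [|? ? Hs HF']; subst. destruct (IH HF') as [IHA _].
    assert (HB : forall M, sm (W q (idx2w (s :: l))) M = ztr q (s :: l) M).
    { intros M. simpl ztr. destruct M.
      - reflexivity.
      - replace (S M - 1)%nat with M by lia. rewrite fold_seq, sm_shift.
        rewrite W_0; auto. 2:{ unfold idx2w. simpl. destruct (s - 1)%nat; discriminate. }
        rewrite Rplus_0_l. apply sm_ext; intros i _.
        unfold idx2w. simpl flat_map. rewrite <- app_assoc. rewrite W_rep. simpl W.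
        fold (idx2w l). rewrite <- sm_S, IHA by lia. change (1 + i)%nat with (S i).
        unfold qterm. fold (qi q (S i)).
        pose proof (qi_ge1 q (S i) Hq ltac:(lia)).
        destruct s as [|s']; [lia|]. replace (S s' - 1)%nat with s' by lia.
        rewrite Nat.mul_comm, pow_mult. unfold Rdiv. rewrite Rpow_mult_distr, pow_inv.
        simpl pow. field. split; [apply pow_nonzero|]; lra. }
    split; auto.
Qed.
Lemma flat_map_comp {A B C} (f : B -> list C) (h : A -> list B) L :
  flat_map f (flat_map h L) = flat_map (fun j => flat_map f (h j)) L.
Proof. induction L; simpl; auto. rewrite flat_map_app, IHL. auto. Qed.

Lemma rev_negb_flat {A} (f : A -> list bool) L :
  rev (map negb (flat_map f L)) = flat_map (fun j => rev (map negb (f j))) (rev L).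
Proof. induction L; simpl; auto. rewrite map_app, rev_app_distr, IHL, flat_map_app.
  simpl. rewrite app_nil_r. auto. Qed.

Lemma idx2w_rep1 b : idx2w (repeat 1%nat b) = repeat false b.
Proof. induction b; simpl; auto. unfold idx2w in *. simpl. rewrite IHb. auto. Qed.

Lemma block_w a b : idx2w ((a + 2)%nat :: repeat 1%nat b) = repeat true (S a) ++ repeat false (S b).
Proof.
  unfold idx2w. simpl flat_map. fold (idx2w (repeat 1%nat b)). rewrite idx2w_rep1.
  replace (a + 2 - 1)%nat with (S a) by lia. rewrite <- app_assoc. auto.
Qed.

Lemma lhs_w n a b : idx2w (lhs_args n a b) =
  flat_map (fun j => repeat true (S (a j)) ++ repeat false (S (b j))) (seq 1 n).
Proof. unfold lhs_args, idx2w. rewrite flat_map_comp. apply flat_map_ext. intros j.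
  apply block_w. Qed.

Lemma rhs_w n a b : idx2w (rhs_args n a b) =
  flat_map (fun j => repeat true (S (b j)) ++ repeat false (S (a j))) (rev (seq 1 n)).
Proof. unfold rhs_args, idx2w. rewrite flat_map_comp. apply flat_map_ext. intros j.
  apply block_w. Qed.

Lemma dual_w n a b : rev (map negb (idx2w (lhs_args n a b))) = idx2w (rhs_args n a b).
Proof.
  rewrite lhs_w, rhs_w, rev_negb_flat. apply flat_map_ext. intros j.
  rewrite map_app, !map_repeat, rev_app_distr, !rev_repeat. simpl negb. auto.
Qed.

Lemma Forall_args n a b : List.Forall (fun s => (1 <= s)%nat) (lhs_args n a b)
  /\ List.Forall (fun s => (1 <= s)%nat) (rhs_args n a b).
Proof.
  split; apply Forall_forall; intros x Hx; unfold lhs_args, rhs_args in Hx;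
  apply in_flat_map in Hx; destruct Hx as [j [_ Hj]]; destruct Hj as [Hj|Hj];
  try lia; apply repeat_spec in Hj; lia.
Qed.

Lemma last_fr (l : list bool) c d : last (l ++ false :: repeat false c) d = false.
Proof.
  replace (false :: repeat false c) with (repeat false c ++ false :: nil).
  rewrite app_assoc. apply last_last.
  induction c; simpl; auto. rewrite IHc. auto.
Qed.

Lemma lim_eq_diff (u v : nat -> R) : ex_lim_seq u ->
  is_lim_seq (fun M => u M - v M) 0 -> Lim_seq u = Lim_seq v.
Proof.
  intros Hu Hd. apply Lim_seq_correct in Hu. symmetry. apply is_lim_seq_unique.
  apply is_lim_seq_ext with (fun M => u M - (u M - v M)). intros; ring.
  apply (is_lim_seq_minus _ _ (Lim_seq u) 0); auto.
  destruct (Lim_seq u); unfold is_Rbar_minus, is_Rbar_plus; simpl; auto.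
  f_equal. f_equal. ring.
Qed.

Theorem corollary3p2 (q : R) (n : nat) (a b : nat -> nat) :
  0 < q < 1 -> (1 <= n)%nat ->
  qzeta q (lhs_args n a b) = qzeta q (rhs_args n a b).
Proof.
  intros Hq Hn. unfold qzeta.
  destruct (Forall_args n a b) as [FL FR].
  assert (NL : lhs_args n a b <> nil).
  { unfold lhs_args. destruct n; [lia|]. simpl. discriminate. }
  assert (NR : rhs_args n a b <> nil).
  { unfold rhs_args. destruct n; [lia|]. rewrite seq_S, rev_app_distr. simpl. discriminate. }
  destruct (ztr_W q _ Hq FL) as [_ HL]. destruct (ztr_W q _ Hq FR) as [_ HR].
  rewrite (Lim_seq_ext (fun M => ztr q (lhs_args n a b) M) (sm (W q (idx2w (lhs_args n a b)))))
    by (intros; symmetry; apply HL; auto).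
  rewrite (Lim_seq_ext (fun M => ztr q (rhs_args n a b) M) (sm (W q (idx2w (rhs_args n a b)))))
    by (intros; symmetry; apply HR; auto).
  apply lim_eq_diff.
  - apply ex_lim_seq_incr. intros M. simpl. pose proof (W_nonneg q (idx2w (lhs_args n a b)) M Hq). lra.
  - set (w := idx2w (lhs_args n a b)).
    assert (Hw1 : last w true = false).
    { unfold w. rewrite lhs_w. destruct n; [lia|]. rewrite seq_S, flat_map_app. simpl flat_map.
      rewrite app_nil_r. simpl repeat. rewrite app_comm_cons, app_assoc. apply last_fr. }
    assert (Hw2 : hd false w = true).
    { unfold w. rewrite lhs_w. destruct n; [lia|]. simpl. auto. }
    pose proof (transport q w Hq nil (or_intror Hw1) (or_intror (or_introl Hw2))) as T.
    rewrite app_nil_r in T. unfold w in T. rewrite dual_w in T.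
    apply is_lim_seq_ext with (2 := T). intros M. rewrite Z_left, Z_right; auto.
Qed.
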